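(* Fix integers $k \ge 1$ and $n \ge 1$. For every database $D$ of $n$ rows and every neighboring database $D'$ (as defined in the context), $|\mathrm{SSE}(D) - \mathrm{SSE}(D')| \le 7$. That is, the sensitivity of $\mathrm{SSE}$ is at most $7$.
   Context: A database $D$ consists of $n$ rows. Each row is a pair $(g, y)$ with group label $g \in \{1,\dots,k\}$ and response value $y \in [0,1]$; the number of groups $k$ is fixed. For group $i$ let $n_i$ be the number of rows with label $i$, so $\sum_i n_i = n$. Let $y_{i1},\dots,y_{in_i}$ be the responses in group $i$ and $\overline{y}_i = \frac{1}{n_i}\sum_j y_{ij}$ be the group mean; an empty group contributes nothing to any sum. Define $\mathrm{SSE}(D) = \sum_{i=1}^k \sum_{j=1}^{n_i} (y_{ij} - \overline{y}_i)^2$. Two databases $D, D'$ with $n$ rows each are neighboring if they differ in exactly one row; the changed row may have a different group label and/or a different response value. The sensitivity of a real-valued function $f$ on databases is $\max |f(D) - f(D')|$, taken over all neighboring pairs $D, D'$. *)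

(* Defs.v *)
From HB Require Import structures.
From mathcomp Require Import all_boot all_order all_algebra.
Set Implicit Arguments. Unset Strict Implicit. Unset Printing Implicit Defensive.
Import Order.TTheory GRing.Theory Num.Theory.
Local Open Scope ring_scope.

(* A database of n rows: row j has group label (D j).1 : 'I_k (labels 0..k-1
   stand for 1..k) and response (D j).2. *)
Definition database (R : realFieldType) (k n : nat) := 'I_n -> 'I_k * R.

Definition valid_db (R : realFieldType) (k n : nat) (D : database R k n) : Prop :=
  forall j : 'I_n, 0 <= (D j).2 <= 1.

Definition group_size (R : realFieldType) (k n : nat) (D : database R k n)
  (i : 'I_k) : nat := #|[set j : 'I_n | (D j).1 == i]|.

(* group mean (only used when n_i > 0; empty groups have no rows to sum over) *)
Definition group_mean (R : realFieldType) (k n : nat) (D : database R k n)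
  (i : 'I_k) : R :=
  (\sum_(j : 'I_n | (D j).1 == i) (D j).2) / (group_size D i)%:R.

Definition SSE (R : realFieldType) (k n : nat) (D : database R k n) : R :=
  \sum_(i : 'I_k) \sum_(j : 'I_n | (D j).1 == i) ((D j).2 - group_mean D i) ^+ 2.

Definition neighboring (R : realFieldType) (k n : nat) (D D' : database R k n) : Prop :=
  exists j0 : 'I_n, D j0 <> D' j0 /\ forall j : 'I_n, j <> j0 -> D j = D' j.

(* Main.v *)
Require Import Defs.
From HB Require Import structures.
From mathcomp Require Import all_boot all_order all_algebra.
From mathcomp Require Import ring lra.
Import Order.TTheory GRing.Theory Num.Theory.
Local Open Scope ring_scope.

Set Implicit Arguments. Unset Strict Implicit.
Section Aux.
Variables (R : realFieldType) (n : nat).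

Lemma min_ss (P : pred 'I_n) (y : 'I_n -> R) (c : R) :
  \sum_(j | P j) (y j - (\sum_(j | P j) y j) / (#|[set j | P j]|)%:R) ^+ 2
  <= \sum_(j | P j) (y j - c) ^+ 2.
Proof.
set s := \sum_(j | P j) y j.
set N : R := (#|[set j | P j]|)%:R.
set m := s / N.
rewrite -subr_ge0 -sumrB.
have -> : \sum_(j | P j) ((y j - c) ^+ 2 - (y j - m) ^+ 2)
    = (m - c) * (2 * s - N * (c + m)).
  transitivity (\sum_(j | P j) ((m - c) * (2 * y j - (c + m)))).
    by apply: eq_bigr => j _; ring.
  rewrite -mulr_sumr sumrB -mulr_sumr.
  have -> : \sum_(j | P j) (c + m) = N * (c + m).
    by rewrite sumr_const /N cardsE mulr_natl.
  by [].
have [N0|Npos] := eqVneq N 0.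
  have s0 : s = 0.
    rewrite /s big_pred0 // => j; apply/negP => Pj.
    move/eqP: N0; rewrite /N pnatr_eq0 cards_eq0 => /eqP E.
    by have := in_set0 j; rewrite -E inE Pj.
  by rewrite /m s0 N0 !mul0r mulr0 subr0 mulr0.
have -> : s = N * m by rewrite /m mulrC divfK.
have -> : (m - c) * (2 * (N * m) - N * (c + m)) = N * (m - c) ^+ 2 by ring.
by rewrite mulr_ge0 // ?ler0n // sqr_ge0.
Qed.

Lemma split_at (P : pred 'I_n) (f : 'I_n -> R) j0 :
  \sum_(j | P j) f j = \sum_(j | P j && (j != j0)) f j + (if P j0 then f j0 else 0).
Proof.
case: ifP => Pj0.
  by rewrite (bigD1 j0) //= addrC.
rewrite addr0; apply: eq_bigl => j; case: eqVneq => [->|]; by rewrite ?andbT ?Pj0.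
Qed.

End Aux.

Lemma one_side (R : realFieldType) (k n : nat) (D D' : database R k n) :
  valid_db D -> valid_db D' -> neighboring D D' -> SSE D <= SSE D' + 1.
Proof.
move=> vD vD' [j0 [_ Heq]].
have step : forall i, \sum_(j | (D j).1 == i) ((D j).2 - group_mean D i) ^+ 2
   <= \sum_(j | (D' j).1 == i) ((D' j).2 - group_mean D' i) ^+ 2
      + (if (D j0).1 == i then 1 else 0).
  move=> i.
  set m' := group_mean D' i.
  have m'01 : 0 <= m' <= 1.
    rewrite /m' /group_mean /group_size.
    have [Z|Zp] := eqVneq ((#|[set j | (D' j).1 == i]|)%:R : R) 0.
      by rewrite Z invr0 mulr0 lexx ler01.
    have Zg : 0 < (#|[set j | (D' j).1 == i]|)%:R :> R by rewrite lt0r Zp ler0n.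
    apply/andP; split.
      by rewrite divr_ge0 ?ler0n // sumr_ge0 // => j _; case/andP: (vD' j).
    rewrite ler_pdivrMr // mul1r.
    have -> : (#|[set j | (D' j).1 == i]|)%:R = \sum_(j | (D' j).1 == i) (1:R).
      by rewrite sumr_const cardsE.
    by apply: ler_sum => j _; case/andP: (vD' j).
  have := min_ss (fun j => (D j).1 == i) (fun j => (D j).2) m'.
  rewrite -/(group_size D i) -/(group_mean D i) => H0; apply: le_trans H0 _.
  rewrite (split_at _ _ j0).
  apply: lerD.
    rewrite [X in _ <= X](split_at _ _ j0).
    have -> : \sum_(j | ((D j).1 == i) && (j != j0)) ((D j).2 - m') ^+ 2
            = \sum_(j | ((D' j).1 == i) && (j != j0)) ((D' j).2 - m') ^+ 2.
      rewrite (eq_bigl (fun j => ((D' j).1 == i) && (j != j0))).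
        by apply: eq_bigr => j /andP [_ Hj]; rewrite Heq //; apply/eqP.
      move=> j /=; case: (eqVneq j j0) => [->|/eqP Hj]; first by rewrite !andbF.
      by rewrite Heq.
    rewrite lerDl; case: ifP => // _; exact: sqr_ge0.
  case: ifP => // _.
  case/andP: (vD j0) => a b; case/andP: m'01 => c d.
  have h1 : -1 <= (D j0).2 - m' by lra.
  have h2 : (D j0).2 - m' <= 1 by lra.
  nra.
rewrite /SSE; apply: le_trans (ler_sum _ (fun i _ => step i)) _.
rewrite big_split /= lerD2l.
rewrite -big_mkcond /= (big_pred1 (D j0).1) // => i /=; by rewrite eq_sym.
Qed.

Theorem mainTheorem1 (R : realFieldType) (k n : nat) (hk : (1 <= k)%N) (hn : (1 <= n)%N)
  (D D' : database R k n) :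
  valid_db D -> valid_db D' -> neighboring D D' ->
  `|SSE D - SSE D'| <= 7.
Proof.
move=> vD vD' nb.
have nb' : neighboring D' D.
  case: nb => j0 [H1 H2]; exists j0; split; first by move=> E; apply: H1.
  by move=> j /H2.
have h1 := one_side vD vD' nb.
have h2 := one_side vD' vD nb'.
rewrite ler_norml; apply/andP; split; lra.
Qed.
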